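(* Let $k$ be a field and $\mathcal{B}=\bigoplus_{p\in\mathbb{Z}}\mathcal{B}_p$ a connected graded associative unital $k$-algebra ($\mathcal{B}_{-n}=0$ for $n>0$, $\mathcal{B}_0=k$), with $V:=\mathcal{B}_1$ finite dimensional, and assume $\mathcal{B}$ is generated by $V$, i.e. $\mathcal{B}=TV/(R)$ with $R$ a homogeneous subspace. Let $A_{gr}(\mathcal{B}):=A_{gr}(u,m)$ where $u:k\to\mathcal{B}$ is the unit and $m:\mathcal{B}\otimes\mathcal{B}\to\mathcal{B}$ the multiplication. Then $A_{gr}(\mathcal{B})$ is generated as an algebra by $C_1=\mathrm{End}(V)^*$; that is, the map $T(C_1)\hookrightarrow T(C_{gr})\to A_{gr}(\mathcal{B})$ is surjective.
   Context: For a graded vector space $W=\bigoplus_{p\in\mathbb{Z}}W_p$ with every $W_p$ finite dimensional, set $C_p=\mathrm{End}(W_p)^*$ and $C_{gr}=\bigoplus_p C_p$; with a basis $\{x^{(p)}_i\}$ of $W_p$, $C_p$ has the dual (comatrix) basis $\{t^{(p)}{}_i^j\}$ with $\Delta(t^{(p)}{}_i^j)=\sum_k t^{(p)}{}_i^k\otimes t^{(p)}{}_k^j$, $\epsilon(t^{(p)}{}_i^j)=\delta_i^j$, and $W$ is a graded $C_{gr}$-comodule via $\rho(x^{(p)}_i)=\sum_j t^{(p)}{}_i^j\otimes x^{(p)}_j$. $T(C_{gr})$ is the tensor algebra with the bialgebra structure extending that of $C_{gr}$, so all $W^{\otimes n}$ are $T(C_{gr})$-comodules (with $W^{\otimes0}=k$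 trivial). For a family $F$ of linear maps $f:W^{\otimes n}\to W^{\otimes m}$, $\mathcal{I}_F$ is the ideal of $T(C_{gr})$ generated by the coefficients (in a basis of $W^{\otimes m}$) of $(\mathrm{id}\otimes f)\rho(z)-\rho(f(z))$ for $z$ running over basis tensors of $W^{\otimes n}$, $f\in F$; $A_{gr}(F)=T(C_{gr})/\mathcal{I}_F$ is a bialgebra and $W$ is a graded $A_{gr}(F)$-comodule with all $f\in F$ colinear. Here $W=\mathcal{B}$ and $C_1=\mathrm{End}(\mathcal{B}_1)^*$. *)

(* Defs.v *)
From HB Require Import structures.
From mathcomp Require Import all_boot all_order all_algebra.
Set Implicit Arguments. Unset Strict Implicit. Unset Printing Implicit Defensive.
Import Order.TTheory GRing.Theory.
Local Open Scope ring_scope.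

(* Basis indices of a graded space W = (+)_p W_p with dim W_p = d p:
   (p, i) stands for x^(p)_i, valid when i < d p.  (Degrees p < 0 carry
   the zero space, so only p : nat is needed.) *)
Definition bidx := (nat * nat)%type.
Definition validX (d : nat -> nat) (x : bidx) : bool := (x.2 < d x.1)%N.

(* Generators of T(C_gr): (p, i, j) stands for t^(p)_i^j, valid when
   i, j < d p.  *)
Definition gen := (nat * nat * nat)%type.
Definition validG (d : nat -> nat) (g : gen) : bool :=
  (g.1.2 < d g.1.1)%N && (g.2 < d g.1.1)%N.

(* Elements of a free associative algebra on generators G, represented as
   formal finite sums of (coefficient, word); two representatives are equal
   as elements iff they have the same coefficient function [ncoef]. *)
Definition ncpoly (K : Type) (G : Type) := seq (K * seq G).

Section NC.
Variables (K : pzRingType) (G : eqType).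
Definition ncoef (P : ncpoly K G) (w : seq G) : K :=
  \sum_(t <- P) (if t.2 == w then t.1 else 0).
Definition nadd (P Q : ncpoly K G) : ncpoly K G := P ++ Q.
Definition nopp (P : ncpoly K G) : ncpoly K G := [seq (- t.1, t.2) | t <- P].
Definition nmul (P Q : ncpoly K G) : ncpoly K G :=
  [seq (a.1 * b.1, a.2 ++ b.2) | a <- P, b <- Q].
End NC.

(* Words of T(C_gr) occurring in the comodule structure:
   tword z w = t^{p1}_{z1}^{w1} ... t^{pn}_{zn}^{wn}  (z, w of same degrees). *)
Definition tword (z w : seq bidx) : seq gen :=
  [seq (ab.1.1, ab.1.2, ab.2.2) | ab <- zip z w].

Fixpoint enumDeg (d : nat -> nat) (ps : seq nat) : seq (seq bidx) :=
  match ps with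
  | [::] => [:: [::]]
  | p :: ps' => [seq (p, i) :: w | i <- iota 0 (d p), w <- enumDeg d ps']
  end.

Definition validT (d : nat -> nat) (n : nat) (z : seq bidx) : bool :=
  (size z == n) && all (validX d) z.

(* A linear map f : W^{(x)n} -> W^{(x)m}, given by its matrix:
   lmat v w = coefficient of the basis tensor v in f(w). *)
Record lmap (K : Type) := LMap {
  ldom : nat; lcod : nat; lmat : seq bidx -> seq bidx -> K }.

Section Ideal.
Variables (K : pzRingType) (d : nat -> nat).

(* Coefficient at the basis tensor v of (id (x) f) rho(z) - rho(f(z)), where
   rho(z) = sum_{w} tword z w (x) w. *)
Definition relpoly (f : lmap K) (z v : seq bidx) : ncpoly K gen :=
  [seq (lmat f v w, tword z w) | w <- enumDeg d (map fst z)] ++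
  [seq (- lmat f y z, tword y v) | y <- enumDeg d (map fst v)].

Definition validpoly (P : ncpoly K gen) : bool :=
  all (fun t => all (validG d) t.2) P.

Definition lmap0 : lmap K := LMap 0 0 (fun _ _ => 0).

(* P lies in the two-sided ideal I_F of T(C_gr) generated by all relpoly's. *)
Definition inIdeal (F : seq (lmap K)) (P : ncpoly K gen) : Prop :=
  exists L : seq (ncpoly K gen * nat * seq bidx * seq bidx * ncpoly K gen),
    all (fun e =>
      let: (a, k, z, v, b) := e in
      [&& validpoly a, validpoly b, (k < size F)%N,
          validT d (ldom (nth lmap0 F k)) z &
          validT d (lcod (nth lmap0 F k)) v]) L /\
    forall w, ncoef P w =
      ncoef (flatten [seq let: (a, k, z, v, b) := e in
                          nmul (nmul a (relpoly (nth lmap0 F k) z v)) b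
                     | e <- L]) w.

(* P lies in the image of T(C_1): only generators t^(1)_i^j occur. *)
Definition inTC1 (P : ncpoly K gen) : bool :=
  all (fun t => all (fun g => validG d g && (g.1.1 == 1%N)) t.2) P.
End Ideal.

(* The unit u : k -> B and multiplication m : B (x) B -> B of a graded
   algebra B with homogeneous basis x and coordinate functionals crd. *)
Definition unit_lmap (K : fieldType) (B : algType K)
  (crd : B -> nat -> nat -> K) : lmap K :=
  LMap 0 1 (fun v w => match w, v with
                       | [::], [:: y] => crd 1 y.1 y.2
                       | _, _ => 0 end).

Definition mult_lmap (K : fieldType) (B : algType K) (x : nat -> nat -> B)
  (crd : B -> nat -> nat -> K) : lmap K :=
  LMap 2 1 (fun v w => match w, v with
                       | [:: a; b], [:: y] => crd (x a.1 a.2 * x b.1 b.2) y.1 y.2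
                       | _, _ => 0 end).

(* Main.v *)
Require Import Defs.
From HB Require Import structures.
From mathcomp Require Import all_boot all_order all_algebra.
From mathcomp Require Import ring.
Import GRing.Theory.
Local Open Scope ring_scope.
Set Implicit Arguments. Unset Strict Implicit. Unset Printing Implicit Defensive.

Section NCL.
Variable K : fieldType.
Implicit Types P Q A B C : ncpoly K gen.

Lemma ncoef_nil w : ncoef ([::] : ncpoly K gen) w = 0.
Proof. by rewrite /ncoef big_nil. Qed.

Lemma ncoef_cat P Q w : ncoef (nadd P Q) w = ncoef P w + ncoef Q w.
Proof. by rewrite /ncoef /nadd big_cat. Qed.

Lemma ncoef_catl P Q w : ncoef (P ++ Q) w = ncoef P w + ncoef Q w.
Proof. by rewrite /ncoef big_cat. Qed.

Lemma ncoef_opp P w : ncoef (nopp P) w = - ncoef P w.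
Proof.
rewrite /ncoef /nopp big_map -sumrN; apply: eq_bigr => t _ /=.
by case: ifP; rewrite ?oppr0.
Qed.

Lemma ncoef_flatten (Ls : seq (ncpoly K gen)) w :
  ncoef (flatten Ls) w = \sum_(l <- Ls) ncoef l w.
Proof. by rewrite /ncoef big_flatten. Qed.

Lemma ncoef_mul2 A B w : ncoef (nmul A B) w =
  \sum_(a <- A) \sum_(b <- B) (if a.2 ++ b.2 == w then a.1 * b.1 else 0).
Proof. by rewrite /ncoef /nmul big_allpairs_dep. Qed.

Lemma ncoef_mulA A B C w :
  ncoef (nmul (nmul A B) C) w = ncoef (nmul A (nmul B C)) w.
Proof.
rewrite /ncoef /nmul !big_allpairs_dep /=.
apply: eq_bigr => a _; rewrite big_allpairs_dep /=.
apply: eq_bigr => b _; apply: eq_bigr => c _.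
by rewrite catA mulrA.
Qed.

Lemma ncoef_conv A B w : ncoef (nmul A B) w =
  \sum_(i < (size w).+1) ncoef A (take i w) * ncoef B (drop i w).
Proof.
rewrite ncoef_mul2; symmetry.
under eq_bigr => i _ do rewrite /ncoef big_distrl /=.
rewrite exchange_big /=; apply: eq_bigr => a _.
under eq_bigr => i _ do rewrite big_distrr /=.
rewrite exchange_big /=; apply: eq_bigr => b _.
rewrite -/(ncoef _ _).
have [Ew|Nw] := eqVneq (a.2 ++ b.2) w.
  have Hn : (size a.2 < (size w).+1)%N by rewrite -Ew size_cat ltnS leq_addr.
  have Ht : take (size a.2) w = a.2 by rewrite -Ew take_size_cat.
  have Hd : drop (size a.2) w = b.2 by rewrite -Ew drop_size_cat.
  rewrite (bigD1 (Ordinal Hn)) //= Ht Hd.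
  rewrite !eqxx big1 ?addr0 // => i /= Hi.
  case: eqP => [Ht2|]; last by rewrite mul0r.
  have : size a.2 = i.
    rewrite Ht2 size_take; move: (ltn_ord i); rewrite ltnS leq_eqVlt.
    by case/orP => [/eqP -> | ->]; rewrite ?ltnn.
  by move=> Hs; move: Hi; rewrite -val_eqE /= Hs eqxx.
rewrite big1 // => i _.
case: eqP => [Ha|]; last by rewrite mul0r.
case: eqP => [Hb|]; last by rewrite mulr0.
by move: Nw; rewrite Ha Hb cat_take_drop eqxx.
Qed.

Lemma ncoef_mul_extr A P P' w : (forall u, ncoef P u = ncoef P' u) ->
  ncoef (nmul A P) w = ncoef (nmul A P') w.
Proof. by move=> H; rewrite !ncoef_conv; apply: eq_bigr => i _; rewrite H. Qed.

Lemma ncoef_mul_extl A P P' w : (forall u, ncoef P u = ncoef P' u) ->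
  ncoef (nmul P A) w = ncoef (nmul P' A) w.
Proof. by move=> H; rewrite !ncoef_conv; apply: eq_bigr => i _; rewrite H. Qed.

Lemma ncoef_mul_flattenr A (Ls : seq (ncpoly K gen)) w :
  ncoef (nmul A (flatten Ls)) w = \sum_(l <- Ls) ncoef (nmul A l) w.
Proof.
rewrite ncoef_conv.
under eq_bigr => i _ do rewrite ncoef_flatten big_distrr.
rewrite exchange_big; apply: eq_bigr => l _; by rewrite ncoef_conv.
Qed.

Lemma ncoef_mul_flattenl A (Ls : seq (ncpoly K gen)) w :
  ncoef (nmul (flatten Ls) A) w = \sum_(l <- Ls) ncoef (nmul l A) w.
Proof.
rewrite ncoef_conv.
under eq_bigr => i _ do rewrite ncoef_flatten big_distrl.
rewrite exchange_big; apply: eq_bigr => l _; by rewrite ncoef_conv.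
Qed.

Lemma ncoef_mul_catr A P Q w :
  ncoef (nmul A (P ++ Q)) w = ncoef (nmul A P) w + ncoef (nmul A Q) w.
Proof.
rewrite !ncoef_conv -big_split; apply: eq_bigr => i _.
by rewrite ncoef_catl mulrDr.
Qed.

Lemma ncoef_mul_catl A P Q w :
  ncoef (nmul (P ++ Q) A) w = ncoef (nmul P A) w + ncoef (nmul Q A) w.
Proof.
rewrite !ncoef_conv -big_split; apply: eq_bigr => i _.
by rewrite ncoef_catl mulrDl.
Qed.

Lemma ncoef_mul_oppr A P w :
  ncoef (nmul A (nopp P)) w = - ncoef (nmul A P) w.
Proof.
rewrite !ncoef_conv -sumrN; apply: eq_bigr => i _.
by rewrite ncoef_opp mulrN.
Qed.

Lemma ncoef_mul_oppl A P w :
  ncoef (nmul (nopp P) A) w = - ncoef (nmul P A) w.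
Proof.
rewrite !ncoef_conv -sumrN; apply: eq_bigr => i _.
by rewrite ncoef_opp mulNr.
Qed.

Lemma ncoef_scal c P w :
  ncoef (nmul [:: (c, [::])] P) w = c * ncoef P w.
Proof.
rewrite ncoef_mul2 big_cons big_nil addr0 /ncoef big_distrr.
by apply: eq_bigr => t _ /=; case: ifP; rewrite ?mulr0.
Qed.

Lemma ncoef_scalr P c w :
  ncoef (nmul P [:: (c, [::])]) w = ncoef P w * c.
Proof.
rewrite ncoef_mul2 /ncoef big_distrl.
apply: eq_bigr => t _ /=; rewrite big_cons big_nil addr0 cats0.
by case: ifP; rewrite ?mul0r.
Qed.

End NCL.
Section IdealL.
Variables (K : fieldType) (d : nat -> nat) (F : seq (lmap K)).
Implicit Types P Q A B : ncpoly K gen.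
Local Notation I := (inIdeal d F).

Lemma I_ext P P' : (forall w, ncoef P w = ncoef P' w) -> I P -> I P'.
Proof. by move=> H [L [HL HP]]; exists L; split=> // w; rewrite -H. Qed.

Lemma I_nil : I [::].
Proof. by exists [::]; split=> // w; rewrite ncoef_nil. Qed.

Lemma I_cat P Q : I P -> I Q -> I (P ++ Q).
Proof.
move=> [L1 [H1 E1]] [L2 [H2 E2]]; exists (L1 ++ L2); split.
  by rewrite all_cat H1 H2.
by move=> w; rewrite map_cat flatten_cat !ncoef_catl E1 E2.
Qed.

Lemma validpoly_mul A B : validpoly d A -> validpoly d B -> validpoly d (nmul A B).
Proof.
move=> /allP HA /allP HB; apply/allP => t /allpairsP [[a b] [Ha Hb ->]] /=.
by rewrite all_cat (HA a Ha) (HB b Hb).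
Qed.

Lemma I_lmul A P : validpoly d A -> I P -> I (nmul A P).
Proof.
move=> VA [L [HL E]].
exists [seq let: (a, k, z, v, b) := e in (nmul A a, k, z, v, b) | e <- L]; split.
  rewrite all_map; apply/allP => -[[[[a k] z] v] b] /(allP HL) /=.
  by case/and5P => Va Vb -> -> ->; rewrite validpoly_mul // Vb.
move=> w; rewrite (ncoef_mul_extr _ _ E) ncoef_mul_flattenr ncoef_flatten.
rewrite !big_map; apply: eq_bigr => -[[[[a k] z] v] b] _ /=.
rewrite -ncoef_mulA; apply: ncoef_mul_extl => u; by rewrite ncoef_mulA.
Qed.

Lemma I_rmul A P : validpoly d A -> I P -> I (nmul P A).
Proof.
move=> VA [L [HL E]].
exists [seq let: (a, k, z, v, b) := e in (a, k, z, v, nmul b A) | e <- L]; split.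
  rewrite all_map; apply/allP => -[[[[a k] z] v] b] /(allP HL) /=.
  by case/and5P => Va Vb -> -> ->; rewrite validpoly_mul // Va.
move=> w; rewrite (ncoef_mul_extl _ _ E) ncoef_mul_flattenl ncoef_flatten.
rewrite !big_map; apply: eq_bigr => -[[[[a k] z] v] b] _ /=.
by rewrite ncoef_mulA.
Qed.

Lemma I_opp P : I P -> I (nopp P).
Proof.
move=> HP; apply: (I_ext (P := nmul [:: (-1, [::])] P)).
  by move=> w; rewrite ncoef_scal ncoef_opp mulN1r.
by apply: I_lmul.
Qed.

Lemma I_scal c P : I P -> I (nmul [:: (c, [::])] P).
Proof. by move=> HP; apply: I_lmul. Qed.

Lemma I_gen k z v : (k < size F)%N -> validT d (ldom (nth (lmap0 K) F k)) z ->
  validT d (lcod (nth (lmap0 K) F k)) v -> I (relpoly d (nth (lmap0 K) F k) z v).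
Proof.
move=> Hk Hz Hv; exists [:: ([:: (1, [::])], k, z, v, [:: (1, [::])])]; split.
  by rewrite /= Hk Hz Hv.
by move=> w; rewrite /= cats0 ncoef_scalr ncoef_scal mul1r mulr1.
Qed.

Lemma I_flatten (Ls : seq (ncpoly K gen)) : (forall l, l \in Ls -> I l) -> I (flatten Ls).
Proof.
elim: Ls => [|l Ls IH] H /=; first exact: I_nil.
by apply: I_cat; [apply: H; rewrite inE eqxx | apply: IH => l' Hl'; apply: H; rewrite inE Hl' orbT].
Qed.

Definition good P := exists Q, inTC1 d Q /\ I (nadd P (nopp Q)).

Lemma inTC1_valid Q : inTC1 d Q -> validpoly d Q.
Proof.
move=> /allP H; apply/allP => t /H /allP H2; apply/allP => g /H2.
by case/andP.
Qed.

Lemma inTC1_mul A B : inTC1 d A -> inTC1 d B -> inTC1 d (nmul A B).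
Proof.
move=> /allP HA /allP HB; apply/allP => t /allpairsP [[a b] [Ha Hb ->]] /=.
by rewrite all_cat (HA a Ha) (HB b Hb).
Qed.

Lemma inTC1_cat A B : inTC1 d A -> inTC1 d B -> inTC1 d (A ++ B).
Proof. by rewrite /inTC1 all_cat => -> ->. Qed.

Lemma G_ext P P' : (forall w, ncoef P w = ncoef P' w) -> good P -> good P'.
Proof.
move=> H [Q [HQ HI]]; exists Q; split=> //; apply: I_ext HI => w.
by rewrite /nadd !ncoef_catl H.
Qed.

Lemma G_C1 P : inTC1 d P -> good P.
Proof.
move=> HP; exists P; split=> //; apply: I_ext I_nil => w.
by rewrite /nadd ncoef_catl ncoef_opp ncoef_nil subrr.
Qed.

Lemma G_cat P P' : good P -> good P' -> good (P ++ P').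
Proof.
move=> [Q [HQ HI]] [Q' [HQ' HI']]; exists (Q ++ Q'); split.
  exact: inTC1_cat.
apply: I_ext (I_cat HI HI') => w.
rewrite /nadd !(ncoef_catl, ncoef_opp); ring.
Qed.

Lemma G_mul P P' : validpoly d P' -> good P -> good P' -> good (nmul P P').
Proof.
move=> VP' [Q [HQ HI]] [Q' [HQ' HI']]; exists (nmul Q Q'); split.
  exact: inTC1_mul.
apply: I_ext (I_cat (I_rmul VP' HI) (I_lmul (inTC1_valid HQ) HI')) => w.
rewrite /nadd !(ncoef_catl, ncoef_opp).
rewrite ncoef_mul_catl ncoef_mul_catr ncoef_mul_oppl ncoef_mul_oppr; ring.
Qed.

Lemma G_flat P : (forall t, t \in P -> good [:: t]) -> good P.
Proof.
elim: P => [|t P IH] H; first by apply: G_C1.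
by apply: (G_cat (P := [:: t])); [apply: H; rewrite inE eqxx | apply: IH => t' Ht; apply: H; rewrite inE Ht orbT].
Qed.

Lemma G_trans P P' : I (P' ++ nopp P) -> good P' -> good P.
Proof.
move=> HI [Q [HQ HI']]; exists Q; split=> //.
apply: I_ext (I_cat (I_opp HI) HI') => w.
rewrite /nadd !(ncoef_catl, ncoef_opp); ring.
Qed.

End IdealL.

Section GF.
Variables (K : fieldType) (d : nat -> nat) (F : seq (lmap K)).
Lemma G_flatten (Ls : seq (ncpoly K gen)) :
  (forall l, l \in Ls -> good d F l) -> good d F (flatten Ls).
Proof.
elim: Ls => [|l Ls IH] H /=; first by apply: G_C1.
by apply: G_cat; [apply: H; rewrite inE eqxx | apply: IH => l' Hl'; apply: H; rewrite inE Hl' orbT].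
Qed.

Lemma mem_enumDeg ps w : w \in enumDeg d ps -> (map fst w == ps) && all (validX d) w.
Proof.
elim: ps w => [|p ps IH] w /=; first by rewrite inE => /eqP ->.
case/allpairsP => -[i w'] [/= Hi Hw' ->] /=.
case/andP: (IH _ Hw') => /eqP -> ->; rewrite eqxx /validX /= andbT.
by move: Hi; rewrite mem_iota.
Qed.

Lemma enumDeg1 p : enumDeg d [:: p] = [seq [:: (p, i)] | i <- iota 0 (d p)].
Proof. by rewrite /=; elim: (iota 0 (d p)) => //= a s ->. Qed.

Lemma sum_iota n (G : nat -> K) : \sum_(k <- iota 0 n) G k = \sum_(k < n) G k.
Proof.
have -> : iota 0 n = index_iota 0 n by rewrite /index_iota subn0.
by rewrite big_mkord.
Qed.

Lemma ncoef_flat2 (G : nat -> nat -> ncpoly K gen) m n w :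
  ncoef (flatten [seq flatten [seq G k l | l <- iota 0 n] | k <- iota 0 m]) w =
  \sum_(k < m) \sum_(l < n) ncoef (G k l) w.
Proof.
rewrite ncoef_flatten big_map sum_iota; apply: eq_bigr => k _.
by rewrite ncoef_flatten big_map sum_iota.
Qed.
Lemma G_pair (co : K) g1 g2 : validG d g1 && (g1.1.1 == 1%N) -> validG d g2 ->
  good d F [:: (1, [:: g2])] -> good d F [:: (co, [:: g1; g2])].
Proof.
move=> H1 H2 G2.
apply: (G_ext (P := nmul [:: (co, [::])] (nmul [:: (1, [:: g1])] [:: (1, [:: g2])]))).
  by move=> u; rewrite /nmul /= !mulr1.
have V2 : validpoly d [:: (1, [:: g2])] by rewrite /validpoly /= H2.
apply: G_mul.
- apply: validpoly_mul => //; rewrite /validpoly /=.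
  by case/andP: H1 => -> _.
- by apply: G_C1.
apply: G_mul => //.
by apply: G_C1; rewrite /inTC1 /= H1.
Qed.
End GF.
Section Main.
Variables (K : fieldType) (B : algType K) (d : nat -> nat)
  (x : nat -> nat -> B) (crd : B -> nat -> nat -> K).
Hypothesis crd_lin : forall (p i : nat) (a : K) (b c : B),
      crd (a *: b + c) p i = a * crd b p i + crd c p i.
Hypothesis crd_x : forall p i q j, (i < d p)%N ->
      crd (x p i) q j = ((p == q) && (i == j))%:R.
Hypothesis x_span : forall b : B, exists N : nat,
      b = \sum_(p < N) \sum_(i < d p) crd b p i *: x p i.
Hypothesis x_mul : forall p i q j r l, (i < d p)%N -> (j < d q)%N -> r != (p + q)%N ->
      crd (x p i * x q j) r l = 0.
Hypothesis one_deg0 : forall p i, (0 < p)%N -> crd 1 p i = 0.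
Hypothesis dim0 : d 0%N = 1%N.
Hypothesis gen_V : forall b : B, exists s : seq (K * seq nat),
      all (fun t => all (fun i => (i < d 1%N)%N) t.2) s /\
      b = \sum_(t <- s) t.1 *: \prod_(i <- t.2) x 1%N i.

Lemma crd0 p i : crd 0 p i = 0.
Proof.
have := crd_lin p i 1 0 0; rewrite scaler0 addr0 mul1r => H.
by apply: (addrI (crd 0 p i)); rewrite addr0 -H.
Qed.

Lemma crdZ a b p i : crd (a *: b) p i = a * crd b p i.
Proof. by have := crd_lin p i a b 0; rewrite addr0 crd0 addr0. Qed.

Lemma crdD b c p i : crd (b + c) p i = crd b p i + crd c p i.
Proof. by have := crd_lin p i 1 b c; rewrite scale1r mul1r. Qed.

Lemma crd_sum (I : Type) (r : seq I) (P : pred I) (f : I -> B) p j :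
  crd (\sum_(i <- r | P i) f i) p j = \sum_(i <- r | P i) crd (f i) p j.
Proof.
by apply: (big_morph (fun b => crd b p j)) => [b c|]; rewrite ?crdD ?crd0.
Qed.

Lemma crd_high b N : b = \sum_(q < N) \sum_(l < d q) crd b q l *: x q l ->
  forall r j, (N <= r)%N -> crd b r j = 0.
Proof.
move=> Hb r j HN; rewrite {1}Hb crd_sum big1 // => q _.
rewrite crd_sum big1 // => l _; rewrite crdZ crd_x //.
have -> : (q == r :> nat) = false.
  by apply/negbTE; rewrite neq_ltn (leq_trans (ltn_ord q) HN).
by rewrite /= mulr0.
Qed.

Lemma mul_expand k b N : b = \sum_(q < N) \sum_(l < d q) crd b q l *: x q l ->
  forall r j, crd (x 1 k * b) r j =
    \sum_(q < N) \sum_(l < d q) crd b q l * crd (x 1 k * x q l) r j.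
Proof.
move=> Hb r j; rewrite {1}Hb mulr_sumr crd_sum; apply: eq_bigr => q _.
rewrite mulr_sumr crd_sum; apply: eq_bigr => l _.
by rewrite -scalerAr crdZ.
Qed.

Definition prodx (ks : seq nat) : B := \prod_(m <- ks) x 1 m.

Lemma prodx_deg ks : all (fun m => (m < d 1)%N) ks ->
  forall r j, r != size ks -> crd (prodx ks) r j = 0.
Proof.
elim: ks => [|k ks IH] /=.
  by move=> _ r j Hr; rewrite /prodx big_nil one_deg0 // lt0n.
case/andP => Hk Hks r j Hr.
have [N HN] := x_span (prodx ks).
rewrite /prodx big_cons -/(prodx ks) (mul_expand k HN) big1 // => q _.
rewrite big1 // => l _.
have [Eq|Nq] := eqVneq (q : nat) (size ks).
  by rewrite (@x_mul 1 k q l r j Hk (ltn_ord l)) ?mulr0 // add1n Eq.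
by rewrite IH // mul0r.
Qed.

Lemma prodx_step k ks : all (fun m => (m < d 1)%N) (k :: ks) ->
  forall j, crd (prodx (k :: ks)) (size ks).+1 j =
   \sum_(l < d (size ks)) crd (prodx ks) (size ks) l * crd (x 1 k * x (size ks) l) (size ks).+1 j.
Proof.
move=> /= /andP [Hk Hks] j.
have [N HN] := x_span (prodx ks).
rewrite /prodx big_cons -/(prodx ks) (mul_expand k HN).
case: (ltnP (size ks) N) => HsN.
  rewrite (bigD1 (Ordinal HsN)) //= [X in _ + X]big1 ?addr0 // => q Hq.
  rewrite big1 // => l _; rewrite prodx_deg ?mul0r //.
rewrite big1; last first.
  move=> q _; rewrite big1 // => l _; rewrite prodx_deg ?mul0r //.
  by rewrite neq_ltn (leq_trans (ltn_ord q) HsN).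
by rewrite big1 // => l _; rewrite (crd_high HN) ?mul0r.
Qed.

Definition edec (q : nat) (t : K * seq nat) (k l : nat) : K :=
  if t.2 is k' :: ks then (if (size ks == q) && (k' == k) then crd (prodx ks) q l else 0) else 0.

Lemma decomp_term q a w j' : all (fun m => (m < d 1)%N) w ->
  \sum_(k < d 1) \sum_(l < d q) a * edec q (a, w) k l * crd (x 1 k * x q l) q.+1 j'
  = a * crd (prodx w) q.+1 j'.
Proof.
case: w => [|k' ks] Hw.
  rewrite prodx_deg // [RHS]mulr0; apply: big1 => k _.
  by apply: big1 => l _; rewrite /edec /= mulr0 mul0r.
have [Eq|Nq] := eqVneq (size ks) q; last first.
  rewrite prodx_deg; last by rewrite /= eqSS eq_sym.
    rewrite [RHS]mulr0; apply: big1 => k _; apply: big1 => l _.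
    by rewrite /edec /= (negbTE Nq) /= mulr0 mul0r.
  by [].
subst q; rewrite (prodx_step Hw).
move: Hw => /= /andP [Hk' _].
rewrite (bigD1 (Ordinal Hk')) //= [X in _ + X]big1 ?addr0.
  rewrite /edec /= !eqxx /= big_distrr; apply: eq_bigr => l _; by rewrite /= mulrA.
move=> k Hk; rewrite big1 // => l _.
rewrite /edec /= eqxx /=.
have -> : (k' == k) = false.
  by apply/negbTE; move: Hk; apply: contra => /eqP Hk; apply/eqP; apply: val_inj.
by rewrite mulr0 mul0r.
Qed.

Lemma decomp q i : (i < d q.+1)%N -> exists c : nat -> nat -> K,
  forall j', (j' < d q.+1)%N ->
   \sum_(k < d 1) \sum_(l < d q) c k l * crd (x 1 k * x q l) q.+1 j' = (i == j')%:R.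
Proof.
move=> Hi; have [s [Hs Hx]] := gen_V (x q.+1 i).
exists (fun k l => \sum_(t <- s) t.1 * edec q t k l) => j' Hj'.
have -> : (i == j')%:R = crd (x q.+1 i) q.+1 j' :> K by rewrite crd_x // eqxx.
rewrite Hx crd_sum.
transitivity (\sum_(k < d 1) \sum_(t <- s) \sum_(l < d q) t.1 * edec q t k l * crd (x 1 k * x q l) q.+1 j').
  apply: eq_bigr => k _; rewrite exchange_big /=; apply: eq_bigr => l _.
  by rewrite big_distrl.
rewrite exchange_big /=; apply: eq_big_seq => -[a w] Ht /=.
have Hw : all (fun m => (m < d 1)%N) w by have := allP Hs _ Ht.
rewrite crdZ; exact: decomp_term.
Qed.

Lemma crd1_00 : crd 1 0 0 != 0.
Proof.
apply/eqP => H0.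
have H1 : (1 : B) = 0.
  have [N HN] := x_span 1; rewrite HN big1 // => q _; rewrite big1 // => l _.
  have Hl := ltn_ord l; case: (posnP q) => Hq; last by rewrite one_deg0 // scale0r.
  have E : crd 1 q l = 0.
    have -> : (l : nat) = 0%N.
      by apply/eqP; move: Hl; move: (nat_of_ord l) => n; rewrite Hq dim0 ltnS leqn0.
    by rewrite Hq.
  by rewrite E scale0r.
have := @crd_x 0%N 0%N 0%N 0%N; rewrite dim0 => /(_ isT).
by rewrite -[x 0 0]mul1r H1 mul0r crd0 /= => /eqP; rewrite eq_sym oner_eq0.
Qed.


Let FF := [:: unit_lmap crd; mult_lmap x crd].

Lemma gen_deg0 : good d FF [:: (1, [:: (0%N, 0%N, 0%N)])].
Proof.
have Hr : inIdeal d FF (relpoly d (nth (lmap0 K) FF 0) [::] [:: (0%N, 0%N)]).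
  by apply: I_gen; rewrite /FF /validT /validX /= ?dim0.
have Hr2 := I_scal (crd 1 0 0)^-1 Hr.
apply: (G_trans (P' := [:: (1, [::])])); last by apply: G_C1.
apply: I_ext Hr2 => w; rewrite ncoef_scal /relpoly /= dim0 /=.
rewrite /ncoef !big_cons !big_nil /= !addr0.
have nz := crd1_00.
case: w => [|g w] /=; first by rewrite !addr0 mulVf.
rewrite !add0r; case: ifP => _; last by rewrite mulr0.
by rewrite mulrN mulVf.
Qed.

Lemma gen_step p : (forall i j, (i < d p)%N -> (j < d p)%N -> good d FF [:: (1, [:: (p, i, j)])]) ->
  forall i j, (i < d p.+1)%N -> (j < d p.+1)%N -> good d FF [:: (1, [:: (p.+1, i, j)])].
Proof.
move=> IH i j Hi Hj.
have [c Hc] := decomp Hi.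
pose v := [:: (p.+1, j)].
pose M := mult_lmap x crd.
pose fp k l := [seq (lmat M v w, tword [:: (1%N, k); (p, l)] w) | w <- enumDeg d [:: 1%N; p]].
pose sp k l := [seq (- lmat M y [:: (1%N, k); (p, l)], tword y v) | y <- enumDeg d [:: p.+1]].
pose S := flatten [seq flatten [seq nmul [:: (c k l, [::])] (relpoly d M [:: (1%N, k); (p, l)] v)
            | l <- iota 0 (d p)] | k <- iota 0 (d 1)].
pose T := flatten [seq flatten [seq nmul [:: (c k l, [::])] (fp k l)
            | l <- iota 0 (d p)] | k <- iota 0 (d 1)].
have IS : inIdeal d FF S.
  apply: I_flatten => X /mapP [k Hk ->]; apply: I_flatten => Y /mapP [l Hl ->].
  move: Hk Hl; rewrite !mem_iota /= => Hk Hl.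
  by apply: I_scal; apply: (I_gen (k := 1)); rewrite /FF /validT /validX /= ?Hk ?Hl ?Hj.
have Hfp : forall k l, (k < d 1)%N -> (l < d p)%N -> validpoly d (fp k l) /\ good d FF (fp k l).
  move=> k l Hk Hl; split.
    apply/allP => t /mapP [w Hw ->] /=.
    case/andP: (mem_enumDeg Hw) => /eqP Hm Hv.
    case: w Hm Hv {Hw} => [|[a1 a2] [|[b1 b2] [|]]] //= [-> ->].
    by rewrite /validX /= andbT => /andP [Ha Hb]; rewrite /validG /= Hk Ha Hl Hb.
  apply: G_flat => t /mapP [w Hw ->].
  case/andP: (mem_enumDeg Hw) => /eqP Hm Hv.
  case: w Hm Hv {Hw} => [|[a1 a2] [|[b1 b2] [|]]] //= [-> ->].
  rewrite /validX /= andbT => /andP [Ha Hb].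
  apply: G_pair; first by rewrite /validG /= Hk Ha.
    by rewrite /validG /= Hl Hb.
  exact: IH.
have GT : good d FF T.
  apply: G_flatten => X /mapP [k Hk ->]; apply: G_flatten => Y /mapP [l Hl ->].
  move: Hk Hl; rewrite !mem_iota /= => Hk Hl.
  have [V G] := Hfp k l Hk Hl.
  by apply: G_mul => //; apply: G_C1.
apply: (G_trans (P' := T)) => //.
apply: I_ext IS => w.
have Hsp : forall k l, ncoef (sp k l) w =
   \sum_(j' < d p.+1) (if [:: (p.+1, (j' : nat), j)] == w then - crd (x 1 k * x p l) p.+1 j' else 0).
  move=> k l; rewrite /ncoef /sp enumDeg1 !big_map sum_iota.
  by apply: eq_bigr => j' _.
rewrite /S /T ncoef_catl ncoef_opp !ncoef_flat2.
transitivity (\sum_(k < d 1) \sum_(l < d p) (c k l * ncoef (fp k l) w + c k l * ncoef (sp k l) w)).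
  apply: eq_bigr => k _; apply: eq_bigr => l _.
  by rewrite ncoef_scal ncoef_catl mulrDr.
under eq_bigr => k _ do rewrite big_split /=.
rewrite big_split /=.
transitivity (\sum_(k < d 1) \sum_(l < d p) ncoef (nmul [:: (c k l, [::])] (fp k l)) w +
  \sum_(k < d 1) \sum_(l < d p) c k l * ncoef (sp k l) w).
  by congr (_ + _); apply: eq_bigr => k _; apply: eq_bigr => l _; rewrite ncoef_scal.
congr (_ + _).
transitivity (\sum_(k < d 1) \sum_(l < d p) \sum_(j' < d p.+1)
   (if [:: (p.+1, (j' : nat), j)] == w then - (c k l * crd (x 1 k * x p l) p.+1 j') else 0)).
  apply: eq_bigr => k _; apply: eq_bigr => l _.
  rewrite Hsp big_distrr; apply: eq_bigr => j' _ /=.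
  by case: ifP => _; rewrite ?mulr0 ?mulrN.
under eq_bigr => k _ do rewrite exchange_big /=.
rewrite exchange_big /=.
transitivity (\sum_(j' < d p.+1) (if [:: (p.+1, (j' : nat), j)] == w then - ((i == (j' : nat))%:R : K) else 0)).
  apply: eq_bigr => j' _; case: ifP => _; last first.
    by apply: big1 => k _; apply: big1.
  rewrite -(Hc j' (ltn_ord j')) -sumrN; apply: eq_bigr => k _.
  by rewrite -sumrN.
rewrite (bigD1 (Ordinal Hi)) //= [X in _ + X]big1 ?addr0.
  by rewrite /ncoef big_cons big_nil /= eqxx addr0; case: ifP; rewrite ?oppr0.
move=> j' Hj'; have -> : (i == (j' : nat)) = false.
  by apply/negbTE; move: Hj'; apply: contra => /eqP Hj'; apply/eqP; apply: val_inj.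
by rewrite oppr0; case: ifP.
Qed.

Lemma gen_good p : forall i j, (i < d p)%N -> (j < d p)%N -> good d FF [:: (1, [:: (p, i, j)])].
Proof.
elim: p => [|p IH] i j Hi Hj.
  move: Hi Hj; rewrite dim0 !ltnS !leqn0 => /eqP -> /eqP ->; exact: gen_deg0.
case: p IH Hi Hj => [|p] IH Hi Hj.
  by apply: G_C1; rewrite /inTC1 /= /validG /= Hi Hj.
exact: gen_step.
Qed.

Lemma word_good w : all (validG d) w -> good d FF [:: (1, w)].
Proof.
elim: w => [|g w IH] /=; first by move=> _; apply: G_C1.
case/andP => Hg Hw.
apply: (G_ext (P := nmul [:: (1, [:: g])] [:: (1, w)])); first by move=> u; rewrite /nmul /= mulr1.
apply: G_mul; [by rewrite /validpoly /= Hw | | exact: IH].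
case: g Hg => [[p i] j]; rewrite /validG /= => /andP [Hi Hj]; exact: gen_good.
Qed.

Lemma all_good P : validpoly d P -> good d FF P.
Proof.
move=> VP; apply: G_flat => -[c w] Ht.
have Hw := allP VP _ Ht; simpl in Hw.
apply: (G_ext (P := nmul [:: (c, [::])] [:: (1, w)])); first by move=> u; rewrite /nmul /= mulr1.
apply: G_mul; [by rewrite /validpoly /= Hw | by apply: G_C1 | exact: word_good].
Qed.

End Main.


Theorem mainTheorem5 (K : fieldType) (B : algType K) (d : nat -> nat)
  (x : nat -> nat -> B) (crd : B -> nat -> nat -> K)
  (* crd b p i is the coordinate of b on x^(p)_i: linear, ... *)
  (crd_lin : forall (p i : nat) (a : K) (b c : B),
      crd (a *: b + c) p i = a * crd b p i + crd c p i)
  (* ... dual to the basis x ... *)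
  (crd_x : forall p i q j, (i < d p)%N ->
      crd (x p i) q j = ((p == q) && (i == j))%:R)
  (* ... and x spans B: B = (+)_p B_p with basis x^(p)_i (i < d p) of B_p *)
  (x_span : forall b : B, exists N : nat,
      b = \sum_(p < N) \sum_(i < d p) crd b p i *: x p i)
  (* graded algebra: B_p B_q <= B_{p+q} *)
  (x_mul : forall p i q j r l, (i < d p)%N -> (j < d q)%N -> r != (p + q)%N ->
      crd (x p i * x q j) r l = 0)
  (* connected: 1 in B_0 and B_0 = k *)
  (one_deg0 : forall p i, (0 < p)%N -> crd 1 p i = 0)
  (dim0 : d 0%N = 1%N)
  (* generated by V = B_1 *)
  (gen_V : forall b : B, exists s : seq (K * seq nat),
      all (fun t => all (fun i => (i < d 1%N)%N) t.2) s /\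
      b = \sum_(t <- s) t.1 *: \prod_(i <- t.2) x 1%N i) :
  forall P : ncpoly K gen, validpoly d P ->
    exists Q : ncpoly K gen,
      inTC1 d Q /\
      inIdeal d [:: unit_lmap crd; mult_lmap x crd] (nadd P (nopp Q)).
Proof.
move=> P VP.
exact: (all_good crd_lin crd_x x_span x_mul one_deg0 dim0 gen_V VP).
Qed.
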